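(* Let $A$ be a complete MV-algebra (its natural-order lattice is complete) and let $\{d_i\}_{i\in\Omega}$ be any family of $(\odot,\vee)$-derivations on $A$. Then (1) the map $\bigvee_{i\in\Omega}d_i$, defined by $(\bigvee_i d_i)(x)=\bigvee_i d_i(x)$, is a $(\odot,\vee)$-derivation on $A$; and (2) $\operatorname{Der}(A)$, ordered pointwise, is a complete lattice with bottom $\mathbf{0}_A$ and top $\mathrm{Id}_A$.
   Context: An MV-algebra is an algebra $(A,\oplus,{}^*,0)$ of type $(2,1,0)$ satisfying: $x\oplus(y\oplus z)=(x\oplus y)\oplus z$, $x\oplus y=y\oplus x$, $x\oplus 0=x$, $x^{**}=x$, $x\oplus 0^*=0^*$, $(x^*\oplus y)^*\oplus y=(y^*\oplus x)^*\oplus x$. Put $1=0^*$ and $x\odot y=(x^*\oplus y^* )^*$. The natural order is $x\le y$ iff $x^*\oplus y=1$, with lattice operations $x\vee y=(x\odot y^* )\oplus y$, $x\wedge y=x\odot(x^*\oplus y)$. A $(\odot,\vee)$-derivation on $A$ is a map $d:A\to A$ with $d(x\odot y)=(d(x)\odot y)\vee(x\odot d(y))$ for all $x,y\in A$; $\operatorname{Der}(A)$ is the set of these, ordered by $d\preceq d'$ iff $d(x)\le d'(x)$ for all $x$. $\mathbf{0}_A$ is the constant zero map. *)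

(* Defs.v *)
Record MVAlgebra := {
  mv_car :> Type;
  mv_oplus : mv_car -> mv_car -> mv_car;
  mv_star : mv_car -> mv_car;
  mv_zero : mv_car;
  mv_assoc : forall x y z, mv_oplus x (mv_oplus y z) = mv_oplus (mv_oplus x y) z;
  mv_comm : forall x y, mv_oplus x y = mv_oplus y x;
  mv_zero_r : forall x, mv_oplus x mv_zero = x;
  mv_starK : forall x, mv_star (mv_star x) = x;
  mv_one_abs : forall x, mv_oplus x (mv_star mv_zero) = mv_star mv_zero;
  mv_luk : forall x y,
    mv_oplus (mv_star (mv_oplus (mv_star x) y)) y =
    mv_oplus (mv_star (mv_oplus (mv_star y) x)) x
}.

Section MVOps.
Variable A : MVAlgebra.

Definition mv_one : A := mv_star A (mv_zero A).
Definition mv_odot (x y : A) : A :=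
  mv_star A (mv_oplus A (mv_star A x) (mv_star A y)).
Definition mv_le (x y : A) : Prop := mv_oplus A (mv_star A x) y = mv_one.
Definition mv_join (x y : A) : A := mv_oplus A (mv_odot x (mv_star A y)) y.
Definition mv_meet (x y : A) : A := mv_odot x (mv_oplus A (mv_star A x) y).

Definition mv_is_lub (P : A -> Prop) (s : A) : Prop :=
  (forall y, P y -> mv_le y s) /\
  (forall u, (forall y, P y -> mv_le y u) -> mv_le s u).

Definition mv_complete : Prop := forall P : A -> Prop, exists s, mv_is_lub P s.

Definition mv_derivation (d : A -> A) : Prop :=
  forall x y, d (mv_odot x y) = mv_join (mv_odot (d x) y) (mv_odot x (d y)).

Definition der_le (d d' : A -> A) : Prop := forall x, mv_le (d x) (d' x).

End MVOps.

Definition complete_lattice_on {T : Type} (X : T -> Prop) (le : T -> T -> Prop)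
  : Prop :=
  (forall a, X a -> le a a) /\
  (forall a b, X a -> X b -> le a b -> le b a -> a = b) /\
  (forall a b c, X a -> X b -> X c -> le a b -> le b c -> le a c) /\
  (forall S : T -> Prop, (forall a, S a -> X a) ->
     exists s, X s /\ (forall a, S a -> le a s) /\
               (forall u, X u -> (forall a, S a -> le a u) -> le s u)) /\
  (forall S : T -> Prop, (forall a, S a -> X a) ->
     exists s, X s /\ (forall a, S a -> le s a) /\
               (forall u, X u -> (forall a, S a -> le u a) -> le u s)).

(* Main.v *)
Require Import Defs.
From Stdlib Require Import ClassicalEpsilon FunctionalExtensionality.

Section MVL.
Variable A : MVAlgebra.
Local Notation "x +' y" := (mv_oplus A x y) (at level 50, left associativity).
Local Notation st := (mv_star A).
Local Notation o := (mv_zero A).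
Local Notation le := (mv_le A).
Local Notation od := (mv_odot A).
Local Notation jn := (mv_join A).

Lemma starK x : st (st x) = x. Proof. apply mv_starK. Qed.
Lemma add0l x : o +' x = x. Proof. rewrite mv_comm; apply mv_zero_r. Qed.
Lemma add1l x : st o +' x = st o. Proof. rewrite mv_comm; apply mv_one_abs. Qed.
Lemma addNx x : st x +' x = st o.
Proof.
  pose proof (mv_luk A x (st o)) as H.
  rewrite mv_one_abs in H. rewrite starK in H. rewrite add0l in H. now symmetry.
Qed.
Lemma st_inj a b : st a = st b -> a = b.
Proof. intro H. rewrite <- (starK a), <- (starK b), H; reflexivity. Qed.
Lemma od_comm x y : od x y = od y x.
Proof. unfold mv_odot. now rewrite mv_comm. Qed.

Lemma le_ex x y : le x y <-> exists a, y = x +' a.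
Proof.
  unfold mv_le, mv_one. split.
  - intro H. pose proof (mv_luk A x y) as L. rewrite H, starK, add0l in L.
    exists (st (st y +' x)). exact (eq_trans L (mv_comm _ _ _)).
  - intros [a ->]. now rewrite mv_assoc, addNx, add1l.
Qed.
Lemma le_refl x : le x x. Proof. apply addNx. Qed.
Lemma le_trans x y z : le x y -> le y z -> le x z.
Proof.
  rewrite !le_ex. intros [a ->] [b ->]. exists (a +' b). now rewrite mv_assoc.
Qed.
Lemma le_antisym x y : le x y -> le y x -> x = y.
Proof.
  unfold mv_le, mv_one. intros H1 H2. pose proof (mv_luk A x y) as L.
  rewrite H1, H2, starK, !add0l in L. now symmetry.
Qed.
Lemma le_add x y z : le x y -> le (x +' z) (y +' z).
Proof.
  rewrite !le_ex. intros [a ->]. exists a.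
  rewrite <- !mv_assoc. f_equal. apply mv_comm.
Qed.
Lemma le_star x y : le x y -> le (st y) (st x).
Proof. unfold mv_le. rewrite starK, mv_comm. auto. Qed.
Lemma le_od x y z : le x y -> le (od x z) (od y z).
Proof. intro H. unfold mv_odot. apply le_star, le_add, le_star, H. Qed.
Lemma le_od_r x y z : le x y -> le (od z x) (od z y).
Proof. intro H. rewrite (od_comm z x), (od_comm z y). now apply le_od. Qed.
Lemma le0 x : le o x. Proof. unfold mv_le, mv_one. apply add1l. Qed.
Lemma resid x y z : le (od x y) z <-> le y (st x +' z).
Proof.
  unfold mv_le, mv_odot. rewrite starK.
  replace (st x +' st y +' z) with (st y +' (st x +' z)). tauto.
  rewrite (mv_comm _ (st x) (st y)). apply mv_assoc.
Qed.
Lemma join_comm a b : jn a b = jn b a.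
Proof. unfold mv_join, mv_odot. rewrite !starK. apply mv_luk. Qed.
Lemma join_upper_r a b : le b (jn a b).
Proof. apply le_ex. eexists. unfold mv_join. apply mv_comm. Qed.
Lemma join_upper_l a b : le a (jn a b).
Proof. rewrite join_comm. apply join_upper_r. Qed.
Lemma join_eq a b : le a b -> jn a b = b.
Proof.
  unfold mv_le, mv_one, mv_join, mv_odot. rewrite starK. intro H.
  now rewrite H, starK, add0l.
Qed.
Lemma join_least a b u : le a u -> le b u -> le (jn a b) u.
Proof.
  intros Ha Hb. apply le_trans with (jn u b).
  - unfold mv_join. apply le_add, le_od, Ha.
  - rewrite join_comm, join_eq; auto using le_refl.
Qed.
Lemma lub_unique P s t : mv_is_lub A P s -> mv_is_lub A P t -> s = t.
Proof.
  intros [H1 H2] [H3 H4]. apply le_antisym; [apply H2 | apply H4]; auto.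
Qed.

Lemma sup_der (Omega : Type) (d : Omega -> A -> A)
  (Hd : forall i, mv_derivation A (d i)) (D : A -> A)
  (HD : forall x, mv_is_lub A (fun y => exists i, y = d i x) (D x)) :
  mv_derivation A D.
Proof.
  intros x y. apply (lub_unique (fun z => exists i, z = d i (od x y))).
  - apply HD.
  - split.
    + intros z [i ->]. rewrite Hd. apply join_least.
      * apply le_trans with (od (D x) y). apply le_od, (proj1 (HD x)); eauto.
        apply join_upper_l.
      * apply le_trans with (od x (D y)). apply le_od_r, (proj1 (HD y)); eauto.
        apply join_upper_r.
    + intros u Hu. apply join_least.
      * rewrite od_comm. apply resid. apply (proj2 (HD x)).
        intros z [i ->]. apply resid. rewrite od_comm.
        apply le_trans with (d i (od x y)). rewrite Hd. apply join_upper_l.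
        apply Hu; eauto.
      * apply resid. apply (proj2 (HD y)).
        intros z [i ->]. apply resid.
        apply le_trans with (d i (od x y)). rewrite Hd. apply join_upper_r.
        apply Hu; eauto.
Qed.

Lemma sup_exists (hA : mv_complete A) (S : (A -> A) -> Prop)
  (HS : forall a, S a -> mv_derivation A a) :
  exists s, mv_derivation A s /\ (forall a, S a -> der_le A a s) /\
    (forall u, mv_derivation A u -> (forall a, S a -> der_le A a u) -> der_le A s u).
Proof.
  set (P := fun x => (fun y => exists i : {d | S d}, y = proj1_sig i x)).
  set (D := fun x => proj1_sig (constructive_indefinite_description _ (hA (P x)))).
  assert (HD : forall x, mv_is_lub A (P x) (D x)).
  { intro x. unfold D. apply proj2_sig. }
  exists D. split; [|split].
  - apply (sup_der {d | S d} (fun i => proj1_sig i)).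
    + intros [d Hd]. simpl. auto.
    + exact HD.
  - intros a Ha x. apply (proj1 (HD x)). exists (exist _ a Ha). reflexivity.
  - intros u Hu Hub x. apply (proj2 (HD x)). intros y [[a Ha] ->]. simpl.
    apply Hub; auto.
Qed.

Lemma der_zero d : mv_derivation A d -> d o = o.
Proof.
  intro H. assert (E : od o o = o).
  { unfold mv_odot. rewrite mv_one_abs. apply starK. }
  rewrite <- E at 1. rewrite H.
  assert (E2 : forall z, od z o = o).
  { intro z. unfold mv_odot. rewrite mv_one_abs. apply starK. }
  rewrite E2, od_comm, E2. apply join_eq, le_refl.
Qed.

Lemma der_le_id d : mv_derivation A d -> forall x, le (d x) x.
Proof.
  intros H x.
  assert (E : od x (st x) = o).
  { unfold mv_odot. rewrite starK, addNx. apply starK. }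
  pose proof (H x (st x)) as Hx. rewrite E, der_zero in Hx by auto.
  assert (L : le (od (d x) (st x)) o).
  { rewrite Hx. apply join_upper_l. }
  assert (L2 : od (d x) (st x) = o) by (apply le_antisym; auto using le0).
  unfold mv_odot in L2. rewrite starK in L2.
  unfold mv_le, mv_one. rewrite <- L2. now rewrite starK.
Qed.
End MVL.

Theorem theorem5p9 (A : MVAlgebra) (hA : mv_complete A) :
  (forall (Omega : Type) (d : Omega -> A -> A),
     (forall i, mv_derivation A (d i)) ->
     forall D : A -> A,
       (forall x, mv_is_lub A (fun y => exists i, y = d i x) (D x)) ->
       mv_derivation A D) /\
  complete_lattice_on (mv_derivation A) (der_le A) /\
  (mv_derivation A (fun _ => mv_zero A) /\
     forall d, mv_derivation A d -> der_le A (fun _ => mv_zero A) d) /\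
  (mv_derivation A (fun x => x) /\
     forall d, mv_derivation A d -> der_le A d (fun x => x)).
Proof.
  split; [exact (sup_der A)|].
  split; [|split; [split|split]].
  - split; [|split; [|split; [|split]]].
    + intros a _ x. apply le_refl.
    + intros a b _ _ H1 H2. apply functional_extensionality. intro x.
      apply le_antisym; auto.
    + intros a b c _ _ _ H1 H2 x. eapply le_trans; eauto.
    + intros S HS. destruct (sup_exists A hA S HS) as [s Hs]. exists s. exact Hs.
    + intros S HS.
      set (L := fun d => mv_derivation A d /\ forall a, S a -> der_le A d a).
      destruct (sup_exists A hA L (fun a Ha => proj1 Ha)) as [s [Hs1 [Hs2 Hs3]]].
      exists s. split; [exact Hs1|split].
      * intros a Ha. apply Hs3; auto. intros b [_ Hb]. auto.
      * intros u Hu Hlb. apply Hs2. split; auto.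
  - intros x y. symmetry.
    assert (E2 : forall z, mv_odot A z (mv_zero A) = mv_zero A).
    { intro z. unfold mv_odot. rewrite mv_one_abs. apply starK. }
    rewrite (od_comm A (mv_zero A) y), !E2. apply join_eq, le_refl.
  - intros d _ x. apply le0.
  - intros x y. symmetry. apply join_eq, le_refl.
  - exact (der_le_id A).
Qed.
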